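(* Let $(G,v)$ be an independent Hamel space over an ordered field $C$. Then for all $x_0,y_0,x_1,y_1\in G$ with $x_0<_0y_0$ and $x_1<_1y_1$ there is $z\in G$ such that $z\neq v(z)$, $x_0<_0z<_0y_0$ and $x_1<_1z<_1y_1$.
   Context: Let $C$ be an ordered field. A $2$-ordered $C$-vector space is a $C$-vector space $G$ with two total orderings $<_0,<_1$ such that $G$ is an ordered $C$-vector space with respect to each. Put $G_\infty=G\cup\{\infty\}$, with $G<_0\infty$, $G<_1\infty$. A Hamel valuation on $G$ is a map $v:G\to G_\infty$ such that for all $x,y\in G$ and $\lambda\in C^{\times}$: $v(x)=\infty$ iff $x=0$; $v(x+y)\ge_0\min_0(v(x),v(y))$; $v(\lambda x)=v(x)$; if $0<_1x<_1y$ then $v(x)\ge_0v(y)$; $v(v(x))=v(x)$ (with $v(\infty)=\infty$); and $v(x)>_10$. A Hamel space is such a pair $(G,v)$; it is independent if for all $a_0,b_0,a_1,b_1\in G\cup\{\pm\infty\}$ with $a_0<_0b_0$, $a_1<_1b_1$ there is $z\in G$ with $a_0<_0z<_0b_0$ and $a_1<_1z<_1b_1$. *)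

(* Defs.v *)
From HB Require Import structures.
From mathcomp Require Import all_boot all_order all_algebra.
Set Implicit Arguments. Unset Strict Implicit. Unset Printing Implicit Defensive.
Import Order.TTheory GRing.Theory Num.Theory.
Local Open Scope ring_scope.

Section HamelDefs.
Variables (C : realFieldType) (G : lmodType C).

Definition slt (le : rel G) (x y : G) : bool := le x y && (x != y).

Definition ordered_vspace (le : rel G) : Prop :=
  [/\ reflexive le, antisymmetric le, transitive le & total le] /\
  (forall x y z : G, le x y -> le (x + z) (y + z)) /\
  (forall (c : C) (x y : G), 0 < c -> le x y -> le (c *: x) (c *: y)).

(* G_infty = G u {infty}, encoded as option G with None = infty (top) *)
Definition le_inf (le : rel G) (a b : option G) : bool :=
  match a, b with
  | _, None => true
  | None, Some _ => false
  | Some x, Some y => le x y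
  end.

Definition lt_inf (le : rel G) (a b : option G) : bool :=
  le_inf le a b && (a != b).

Definition min_inf (le : rel G) (a b : option G) : option G :=
  if le_inf le a b then a else b.

Definition vext (v : G -> option G) (a : option G) : option G :=
  match a with Some x => v x | None => None end.

Definition hamel_valuation (le0 le1 : rel G) (v : G -> option G) : Prop :=
  (forall x, v x = None <-> x = 0) /\
  (forall x y, le_inf le0 (min_inf le0 (v x) (v y)) (v (x + y))) /\
  (forall (c : C) x, c != 0 -> v (c *: x) = v x) /\
  (forall x y, slt le1 0 x -> slt le1 x y -> le_inf le0 (v y) (v x)) /\
  (forall x, vext v (v x) = v x) /\
  (forall x, lt_inf le1 (Some 0) (v x)).

Inductive extG := NegInf | Fin of G | PosInf.

Definition lt_ext (le : rel G) (a b : extG) : bool :=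
  match a, b with
  | NegInf, NegInf => false
  | NegInf, _ => true
  | Fin _, NegInf => false
  | Fin x, Fin y => slt le x y
  | Fin _, PosInf => true
  | PosInf, _ => false
  end.

Definition independent (le0 le1 : rel G) : Prop :=
  forall a0 b0 a1 b1 : extG,
    lt_ext le0 a0 b0 -> lt_ext le1 a1 b1 ->
    exists z : G, [/\ lt_ext le0 a0 (Fin z), lt_ext le0 (Fin z) b0,
                      lt_ext le1 a1 (Fin z) & lt_ext le1 (Fin z) b1].

End HamelDefs.

(* Main.v *)
Require Import Defs.
From HB Require Import structures.
From mathcomp Require Import all_boot all_order all_algebra.
Import Order.TTheory GRing.Theory Num.Theory.
Local Open Scope ring_scope.

Lemma slt_trans_aux (C : realFieldType) (G : lmodType C) (le : rel G) :
  ordered_vspace le -> forall a b c, slt le a b -> slt le b c -> slt le a c.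
Proof.
move=> [[_ anti tr _] _] a b c /andP[ab nab] /andP[bc nbc].
apply/andP; split; first exact: tr ab bc.
apply/negP=> /eqP eac; subst c.
by move/negP: nab; apply; apply/eqP; apply: anti; rewrite ab bc.
Qed.

Theorem lemma4p2 (C : realFieldType) (G : lmodType C) (le0 le1 : rel G)
    (v : G -> option G)
    (Hord0 : ordered_vspace le0) (Hord1 : ordered_vspace le1)
    (Hv : hamel_valuation le0 le1 v) (Hind : independent le0 le1) :
  forall x0 y0 x1 y1 : G,
    slt le0 x0 y0 -> slt le1 x1 y1 ->
    exists z : G, [/\ Some z <> v z,
                      slt le0 x0 z, slt le0 z y0,
                      slt le1 x1 z & slt le1 z y1].
Proof.
move=> x0 y0 x1 y1 h0 h1.
have [z1 [a0 b0 a1 b1]] := Hind (Fin x0) (Fin y0) (Fin x1) (Fin y1) h0 h1.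
rewrite /= in a0 b0 a1 b1.
case: (eqVneq (Some z1) (v z1)) => [fz1|nf]; last first.
  by exists z1; split => //; apply/eqP.
have [z2 [c0 d0 c1 d1]] := Hind (Fin z1) (Fin y0) (Fin z1) (Fin y1) b0 b1.
rewrite /= in c0 d0 c1 d1.
exists z2; split.
- move=> fz2.
  have [_ [_ [_ [Hmon [_ Hpos]]]]] := Hv.
  have p1 : slt le1 0 z1.
    have := Hpos z1; rewrite -fz1 /lt_inf /= => /andP[l ne].
    rewrite /slt l /=; apply/negP => /eqP e; subst z1; by move/negP: ne.
  have := Hmon z1 z2 p1 c1; rewrite -fz1 -fz2 /= => le21.
  case: Hord0 => [[_ anti _ _] _].
  move/andP: c0 => [le12 ne12].
  by move/negP: ne12; apply; apply/eqP; apply: anti; rewrite le12 le21.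
- exact: slt_trans_aux a0 c0.
- exact: d0.
- exact: slt_trans_aux a1 c1.
- exact: d1.
Qed.
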